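(* Assume $\theta_{12}=\theta_{34}=1$. Let $U\in M_{n\times k}(\tilde{\mathcal A})$ satisfy $U^*U=1_k$, put $Q=1-UU^*$, and consider the connection $\nabla_j=\partial_j+A_j$, $A_j=U^*\partial_jU$ ($j=1,\dots,4$), with curvature $F_{mn}=\partial_mA_n-\partial_nA_m+[A_m,A_n]$. Then the anti-self-duality equations $$F_{12}=-F_{34},\qquad F_{13}=F_{24},\qquad F_{14}=-F_{23}$$ are equivalent to the single equation $$U^*\big[-3p_0^*Qp_0+p_1^*Qp_1+p_2^*Qp_2+p_3^*Qp_3\big]U=0,$$ where $p_0=\tfrac12\sigma_1\hat x_1-\tfrac12\sigma_2\hat x_2-\tfrac12\sigma_3\hat x_3+\tfrac i2\hat x_4$, $p_1=\tfrac1{\sqrt2}\sigma_1\hat x_1-\tfrac{i}{\sqrt2}\hat x_4$, $p_2=\tfrac1{\sqrt6}\sigma_1\hat x_1+\sqrt{\tfrac23}\,\sigma_2\hat x_2+\tfrac{i}{\sqrt6}\hat x_4$, $p_3=\tfrac1{2\sqrt3}\sigma_1\hat x_1-\tfrac1{2\sqrt3}\sigma_2\hat x_2+\tfrac{\sqrt3}{2}\sigma_3\hat x_3+\tfrac{i}{2\sqrt3}\hat x_4$, $\sigma_1,\sigma_2,\sigma_3$ are the Pauli matrices, and in this equation $U,U^*,Q$ stand for $U\otimes\mathrm{Id}_2$, $U^*\otimes\mathrm{Id}_2$, $Q\otimes\mathrm{Id}_2$ (the $\hat x_i$ acting diagonally on all matrix indices).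
   Context: $\hat x_1,\dots,\hat x_4$ are the canonical self-adjoint operators on $L^2(\mathbb R^2)$ with $[\hat x_1,\hat x_2]=i\theta_{12}$, $[\hat x_3,\hat x_4]=i\theta_{34}$ and all other commutators zero. $\mathcal A$ is one of the operator algebras $\mathcal S$, $\Gamma^m_\rho$, $\mathcal K^\infty$ (Weyl quantizations of the Schwartz space, of a symbol class with $m<0$, and of smooth functions with all derivatives vanishing at infinity), $\tilde{\mathcal A}$ its unitization. Derivations act entrywise on matrices by $\partial_1 f=\frac{i}{\theta_{12}}[\hat x_2,f]$, $\partial_2 f=-\frac{i}{\theta_{12}}[\hat x_1,f]$, $\partial_3f=\frac{i}{\theta_{34}}[\hat x_4,f]$, $\partial_4f=-\frac{i}{\theta_{34}}[\hat x_3,f]$. Pauli matrices: $\sigma_1=\begin{pmatrix}0&1\\1&0\end{pmatrix}$, $\sigma_2=\begin{pmatrix}0&-i\\i&0\end{pmatrix}$, $\sigma_3=\begin{pmatrix}1&0\\0&-1\end{pmatrix}$. *)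

(* Defs.v *)
From HB Require Import structures.
From mathcomp Require Import all_boot all_order all_algebra all_field.
Set Implicit Arguments. Unset Strict Implicit. Unset Printing Implicit Defensive.
Import Order.TTheory GRing.Theory Num.Theory.
Local Open Scope ring_scope.

Definition is_star (B : algType algC) (star : B -> B) : Prop :=
  [/\ forall a b : B, star (a + b) = star a + star b,
      forall a b : B, star (a * b) = star b * star a,
      forall (c : algC) (a : B), star (c *: a) = c^* *: star a
    & forall a : B, star (star a) = a].

Definition sc (B : algType algC) (c : algC) : B := c%:A.

Definition mxstar (R : pzRingType) (s : R -> R) m n (M : 'M[R]_(m, n)) : 'M[R]_(n, m) :=
  \matrix_(i, j) s (M j i).

Definition CCR (B : algType algC) (star : B -> B) (x1 x2 x3 x4 : B) : Prop :=
  [/\ star x1 = x1, star x2 = x2, star x3 = x3 & star x4 = x4] /\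
  [/\ x1 * x2 - x2 * x1 = sc B 'i, x3 * x4 - x4 * x3 = sc B 'i,
      x1 * x3 = x3 * x1, x1 * x4 = x4 * x1 & x2 * x3 = x3 * x2] /\
  x2 * x4 = x4 * x2.

Section Ops.
Variables (B : algType algC) (star : B -> B) (x1 x2 x3 x4 : B).

Definition comm (a b : B) : B := a * b - b * a.

Definition deriv (j : nat) (f : B) : B :=
  match j with
  | 1 => sc B 'i * comm x2 f
  | 2 => - (sc B 'i * comm x1 f)
  | 3 => sc B 'i * comm x4 f
  | 4 => - (sc B 'i * comm x3 f)
  | _ => 0
  end.

Definition dmx (j : nat) m n (M : 'M[B]_(m, n)) : 'M[B]_(m, n) := map_mx (deriv j) M.

Variables (n k : nat) (U : 'M[B]_(n, k)).

Definition Apot (j : nat) : 'M[B]_k := mxstar star U *m dmx j U.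

Definition Fcurv (a b : nat) : 'M[B]_k :=
  dmx a (Apot b) - dmx b (Apot a) + (Apot a *m Apot b - Apot b *m Apot a).

Definition star2 (M : 'M[B]_2) : 'M[B]_2 := mxstar star M.

Definition sig1 : 'M[B]_2 := \matrix_(i, j) if i == j then 0 else 1.
Definition sig2 : 'M[B]_2 :=
  \matrix_(i, j) if i == j then 0 else if val i == 0%N then sc B (- 'i) else sc B 'i.
Definition sig3 : 'M[B]_2 :=
  \matrix_(i, j) if i == j then (if val i == 0%N then 1 else -1) else 0.

(* sigma_a xhat_a ; scalar xhat_4 means xhat_4 Id_2 *)
Definition sx (s : 'M[B]_2) (x : B) : 'M[B]_2 := s *m x%:M.
Definition cs (c : algC) (M : 'M[B]_2) : 'M[B]_2 := sc B c *: M.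

Definition p0 : 'M[B]_2 :=
  cs (1/2) (sx sig1 x1) - cs (1/2) (sx sig2 x2) - cs (1/2) (sx sig3 x3)
  + cs ('i / 2) x4%:M.
Definition p1 : 'M[B]_2 :=
  cs (1 / sqrtC 2) (sx sig1 x1) - cs ('i / sqrtC 2) x4%:M.
Definition p2 : 'M[B]_2 :=
  cs (1 / sqrtC 6) (sx sig1 x1) + cs (sqrtC (2/3)) (sx sig2 x2)
  + cs ('i / sqrtC 6) x4%:M.
Definition p3 : 'M[B]_2 :=
  cs (1 / (2 * sqrtC 3)) (sx sig1 x1) - cs (1 / (2 * sqrtC 3)) (sx sig2 x2)
  + cs (sqrtC 3 / 2) (sx sig3 x3) + cs ('i / (2 * sqrtC 3)) x4%:M.

(* U (x) Id_2 etc., viewed as matrices with entries in M_2(B) *)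
Definition tens m l (M : 'M[B]_(m, l)) : 'M['M[B]_2]_(m, l) := map_mx (fun b => b%:M) M.
Definition U2 : 'M['M[B]_2]_(n, k) := tens U.
Definition U2s : 'M['M[B]_2]_(k, n) := tens (mxstar star U).
Definition Q2 : 'M['M[B]_2]_n := 1%:M - U2 *m U2s.

(* p^* Q p, with p acting diagonally on the n matrix indices *)
Definition pQp (p : 'M[B]_2) : 'M['M[B]_2]_n := (star2 p)%:M *m Q2 *m p%:M.

Definition bigExpr : 'M['M[B]_2]_k :=
  U2s *m (- (pQp p0 *+ 3) + pQp p1 + pQp p2 + pQp p3) *m U2.

End Ops.

(* Main.v *)
Require Import Defs.
From HB Require Import structures.
From mathcomp Require Import all_boot all_order all_algebra all_field.
From mathcomp Require Import ring.
Import Order.TTheory GRing.Theory Num.Theory.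
Set Implicit Arguments. Unset Strict Implicit. Unset Printing Implicit Defensive.
Local Open Scope ring_scope.

Lemma zid (V : zmodType) (a b c d e h : V) : a - b - (c - d) - (e - c - (b - h)) = a - e - (h - d).
Proof. rewrite !(opprB, opprD, opprK, addrA).
rewrite (addrAC a (-b) d) (addrAC _ (-b) (-c)) subrK.
rewrite (addrAC _ (-c) (-h)) subrK.
by rewrite (addrAC a (-e) d) (addrAC (a+d) (-e)).
Qed.

Lemma zid2 (V : zmodType) (p q c d e : V) : p + c - (q + c) + (- d - - e) = p - d - (q - e).
Proof. rewrite opprD (addrACA p c) (subrr c) addr0 opprK opprB addrACA. by rewrite (addrC e). Qed.

Section Basic.
Variables (B : algType algC) (star : B -> B) (x1 x2 x3 x4 : B).
Hypothesis Hstar : is_star star.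
Hypothesis Hccr : CCR star x1 x2 x3 x4.

Lemma starD a b : star (a + b) = star a + star b. Proof. by case: Hstar. Qed.
Lemma starM a b : star (a * b) = star b * star a. Proof. by case: Hstar. Qed.
Lemma starZ c a : star (c *: a) = c^* *: star a. Proof. by case: Hstar. Qed.
Lemma starK a : star (star a) = a. Proof. by case: Hstar. Qed.
Lemma star0 : star 0 = 0.
Proof. by have := starZ 0 0; rewrite !scale0r rmorph0 scale0r. Qed.
Lemma starN a : star (- a) = - star a.
Proof. by rewrite -scaleN1r starZ rmorphN1 scaleN1r. Qed.
Lemma starB a b : star (a - b) = star a - star b.
Proof. by rewrite starD starN. Qed.
Lemma star1 : star 1 = 1.
Proof.
have h := starM (star 1) 1.
by move: h; rewrite mulr1 !starK mulr1 => h; rewrite {2}h.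
Qed.
Lemma star_sc c : star (sc B c) = sc B c^*.
Proof. by rewrite /sc starZ star1. Qed.
Lemma star_nat m : star m%:R = m%:R.
Proof. by elim: m => [|m IH]; rewrite ?star0 // -addn1 natrD starD IH star1. Qed.
Lemma star_sum (I : Type) (r : seq I) (P : pred I) (F : I -> B) :
  star (\sum_(i <- r | P i) F i) = \sum_(i <- r | P i) star (F i).
Proof. exact: (big_morph _ starD star0). Qed.

Lemma sx1 : star x1 = x1. Proof. by case: Hccr => [[]]. Qed.
Lemma sx2 : star x2 = x2. Proof. by case: Hccr => [[]]. Qed.
Lemma sx3 : star x3 = x3. Proof. by case: Hccr => [[]]. Qed.
Lemma sx4 : star x4 = x4. Proof. by case: Hccr => [[]]. Qed.

Lemma commM (x : B) a b : comm x (a * b) = comm x a * b + a * comm x b.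
Proof. by rewrite /comm mulrBl mulrBr !mulrA subrKA. Qed.
Lemma commD (x : B) a b : comm x (a + b) = comm x a + comm x b.
Proof. by rewrite /comm mulrDr mulrDl opprD addrACA. Qed.
Lemma comm0 (x : B) : comm x 0 = 0.
Proof. by rewrite /comm mulr0 mul0r subrr. Qed.
Lemma commN (x : B) a : comm x (- a) = - comm x a.
Proof. by rewrite /comm mulrN mulNr opprB opprK addrC. Qed.
Lemma commB (x : B) a b : comm x (a - b) = comm x a - comm x b.
Proof. by rewrite commD commN. Qed.
Lemma commZ (x : B) c a : comm x (c *: a) = c *: comm x a.
Proof. by rewrite /comm scalerBr -scalerAl -scalerAr. Qed.
Lemma comm_sum (x : B) (I : Type) (r : seq I) (P : pred I) (F : I -> B) :
  comm x (\sum_(i <- r | P i) F i) = \sum_(i <- r | P i) comm x (F i).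
Proof. exact: (big_morph _ (commD x) (comm0 x)). Qed.
Lemma comm_scl (x : B) c : comm x (sc B c) = 0.
Proof. by rewrite /comm /sc mulr_algl mulr_algr subrr. Qed.
Lemma comm_nat (x : B) m : comm x m%:R = 0.
Proof. by rewrite -(rmorph_nat (in_alg B)) comm_scl. Qed.
Lemma star_comm (x a : B) : star x = x -> star (comm x a) = - comm x (star a).
Proof. by move=> hx; rewrite /comm starB !starM hx opprB. Qed.
Lemma jacobi (x y f : B) :
  comm x (comm y f) - comm y (comm x f) = comm (comm x y) f.
Proof.
rewrite /comm !mulrBr !mulrBl !mulrA; exact: zid.
Qed.

End Basic.

Section Deriv.
Variables (B : algType algC) (star : B -> B) (x1 x2 x3 x4 : B).
Hypothesis Hstar : is_star star.
Hypothesis Hccr : CCR star x1 x2 x3 x4.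
Local Notation dv := (Defs.deriv x1 x2 x3 x4).

Lemma scE c (y : B) : sc B c * y = c *: y.
Proof. by rewrite /sc mulr_algl. Qed.

Lemma dvE j f : dv j f =
  match j with
  | 1 => 'i *: comm x2 f
  | 2 => - ('i *: comm x1 f)
  | 3 => 'i *: comm x4 f
  | 4 => - ('i *: comm x3 f)
  | _ => 0
  end.
Proof. by case: j => [|[|[|[|[|j]]]]] //=; rewrite scE. Qed.

Lemma dvD j a b : dv j (a + b) = dv j a + dv j b.
Proof. by rewrite !dvE; case: j => [|[|[|[|[|j]]]]]; rewrite ?addr0 // commD scalerDr ?opprD. Qed.
Lemma dv0 j : dv j 0 = 0.
Proof. by rewrite !dvE; case: j => [|[|[|[|[|j]]]]]; rewrite // comm0 scaler0 ?oppr0. Qed.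
Lemma dvN j a : dv j (- a) = - dv j a.
Proof. by rewrite !dvE; case: j => [|[|[|[|[|j]]]]]; rewrite ?oppr0 // commN scalerN. Qed.
Lemma dvB j a b : dv j (a - b) = dv j a - dv j b.
Proof. by rewrite dvD dvN. Qed.
Lemma dvZ j c a : dv j (c *: a) = c *: dv j a.
Proof. by rewrite !dvE; case: j => [|[|[|[|[|j]]]]]; rewrite ?scaler0 // commZ ?scalerN scalerA mulrC -scalerA. Qed.
Lemma dv_sum j (I : Type) (r : seq I) (P : pred I) (F : I -> B) :
  dv j (\sum_(i <- r | P i) F i) = \sum_(i <- r | P i) dv j (F i).
Proof. exact: (big_morph _ (dvD j) (dv0 j)). Qed.
Lemma dvM j a b : dv j (a * b) = dv j a * b + a * dv j b.
Proof.
rewrite !dvE; case: j => [|[|[|[|[|j]]]]]; rewrite ?mul0r ?mulr0 ?addr0 //;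
  by rewrite commM scalerDr scalerAl scalerAr ?opprD ?mulNr ?mulrN.
Qed.
Lemma dv_sc j c : dv j (sc B c) = 0.
Proof. by rewrite !dvE; case: j => [|[|[|[|[|j]]]]]; rewrite // comm_scl scaler0 ?oppr0. Qed.
Lemma dv_nat j m : dv j m%:R = 0.
Proof. by rewrite !dvE; case: j => [|[|[|[|[|j]]]]]; rewrite // comm_nat scaler0 ?oppr0. Qed.
Lemma dv_star j f : star (dv j f) = dv j (star f).
Proof.
rewrite !dvE; case: j => [|[|[|[|[|j]]]]]; rewrite ?star0 //;
  by rewrite ?(starN Hstar) (starZ Hstar) (star_comm Hstar) ?(sx1 Hccr) ?(sx2 Hccr) ?(sx3 Hccr) ?(sx4 Hccr) // conjCi scaleNr scalerN opprK.
Qed.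

Lemma cc_of (u v : B) c f : comm u v = sc B c -> comm u (comm v f) = comm v (comm u f).
Proof.
move=> h; apply/eqP; rewrite -subr_eq0 jacobi h; apply/eqP.
by rewrite /comm /sc mulr_algl mulr_algr subrr.
Qed.

Lemma sc0 : sc B 0 = 0. Proof. by rewrite /sc scale0r. Qed.

Lemma c12 : comm x1 x2 = sc B 'i. Proof. by case: Hccr => _ [[]]. Qed.
Lemma c34 : comm x3 x4 = sc B 'i. Proof. by case: Hccr => _ [[]]. Qed.
Lemma c13 : comm x1 x3 = sc B 0.
Proof. by case: Hccr => _ [[]] _ _ h _ _ _; rewrite sc0 /comm h subrr. Qed.
Lemma c14 : comm x1 x4 = sc B 0.
Proof. by case: Hccr => _ [[]] _ _ _ h _ _; rewrite sc0 /comm h subrr. Qed.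
Lemma c23 : comm x2 x3 = sc B 0.
Proof. by case: Hccr => _ [[]] _ _ _ _ h _; rewrite sc0 /comm h subrr. Qed.
Lemma c24 : comm x2 x4 = sc B 0.
Proof. by case: Hccr => _ [_ h]; rewrite sc0 /comm h subrr. Qed.

Lemma cc21 f : comm x2 (comm x1 f) = comm x1 (comm x2 f).
Proof. by symmetry; apply: cc_of c12. Qed.
Lemma cc31 f : comm x3 (comm x1 f) = comm x1 (comm x3 f).
Proof. by symmetry; apply: cc_of c13. Qed.
Lemma cc41 f : comm x4 (comm x1 f) = comm x1 (comm x4 f).
Proof. by symmetry; apply: cc_of c14. Qed.
Lemma cc32 f : comm x3 (comm x2 f) = comm x2 (comm x3 f).
Proof. by symmetry; apply: cc_of c23. Qed.
Lemma cc42 f : comm x4 (comm x2 f) = comm x2 (comm x4 f).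
Proof. by symmetry; apply: cc_of c24. Qed.
Lemma cc43 f : comm x4 (comm x3 f) = comm x3 (comm x4 f).
Proof. by symmetry; apply: cc_of c34. Qed.

Lemma dv_comm a b f : dv a (dv b f) = dv b (dv a f).
Proof.
rewrite !dvE; case: a => [|[|[|[|[|a]]]]]; case: b => [|[|[|[|[|b]]]]];
  rewrite ?(dvE, commZ, commN, comm0, scaler0, oppr0, scalerN, opprK) //;
  by rewrite ?cc21 ?cc31 ?cc41 ?cc32 ?cc42 ?cc43.
Qed.
End Deriv.

Section MxLemmas.
Variables (B : algType algC) (star : B -> B) (x1 x2 x3 x4 : B).
Hypothesis Hstar : is_star star.
Hypothesis Hccr : CCR star x1 x2 x3 x4.
Local Notation dv := (Defs.deriv x1 x2 x3 x4).
Local Notation ms := (mxstar star).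
Local Notation dm := (dmx x1 x2 x3 x4).

Lemma mxstarM m l p (A : 'M[B]_(m, l)) (C : 'M[B]_(l, p)) :
  ms (A *m C) = ms C *m ms A.
Proof.
apply/matrixP => i j; rewrite !mxE (star_sum Hstar); apply: eq_bigr => r _.
by rewrite !mxE (starM Hstar).
Qed.
Lemma mxstarD m l (A C : 'M[B]_(m, l)) : ms (A + C) = ms A + ms C.
Proof. by apply/matrixP => i j; rewrite !mxE (starD Hstar). Qed.
Lemma mxstarN m l (A : 'M[B]_(m, l)) : ms (- A) = - ms A.
Proof. by apply/matrixP => i j; rewrite !mxE (starN Hstar). Qed.
Lemma mxstarB m l (A C : 'M[B]_(m, l)) : ms (A - C) = ms A - ms C.
Proof. by rewrite mxstarD mxstarN. Qed.
Lemma mxstarK m l (A : 'M[B]_(m, l)) : ms (ms A) = A.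
Proof. by apply/matrixP => i j; rewrite !mxE (starK Hstar). Qed.
Lemma mxstar1 m : ms (1%:M : 'M[B]_m) = 1%:M.
Proof. by apply/matrixP => i j; rewrite !mxE (star_nat Hstar) eq_sym. Qed.

Lemma dmxD j m l (A C : 'M[B]_(m, l)) : dm j (A + C) = dm j A + dm j C.
Proof. by apply/matrixP => a b; rewrite !mxE dvD. Qed.
Lemma dmxN j m l (A : 'M[B]_(m, l)) : dm j (- A) = - dm j A.
Proof. by apply/matrixP => a b; rewrite !mxE dvN. Qed.
Lemma dmxB j m l (A C : 'M[B]_(m, l)) : dm j (A - C) = dm j A - dm j C.
Proof. by rewrite dmxD dmxN. Qed.
Lemma dmxM j m l p (A : 'M[B]_(m, l)) (C : 'M[B]_(l, p)) :
  dm j (A *m C) = dm j A *m C + A *m dm j C.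
Proof.
apply/matrixP => a b; rewrite !mxE dv_sum -big_split; apply: eq_bigr => r _.
by rewrite !mxE dvM.
Qed.
Lemma dmx1 j m : dm j (1%:M : 'M[B]_m) = 0.
Proof. by apply/matrixP => a b; rewrite !mxE dv_nat. Qed.
Lemma dmx_star j m l (A : 'M[B]_(m, l)) : dm j (ms A) = ms (dm j A).
Proof. by apply/matrixP => a b; rewrite !mxE (dv_star Hstar Hccr). Qed.
Lemma dmx_comm a b m l (A : 'M[B]_(m, l)) : dm a (dm b A) = dm b (dm a A).
Proof. by apply/matrixP => i j; rewrite !mxE (dv_comm Hccr). Qed.

Variables (n k : nat) (U : 'M[B]_(n, k)).
Hypothesis HU : ms U *m U = 1%:M.

Definition Qm : 'M[B]_n := 1%:M - U *m ms U.

Lemma HUd a : ms U *m dm a U = - (ms (dm a U) *m U).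
Proof.
have := dmxM a (ms U) U; rewrite HU dmx1 dmx_star => /eqP.
by rewrite eq_sym addrC addr_eq0 => /eqP.
Qed.

Lemma Fcurv_E a b : Fcurv star x1 x2 x3 x4 U a b =
  ms (dm a U) *m Qm *m dm b U - ms (dm b U) *m Qm *m dm a U.
Proof.
rewrite /Fcurv /Apot !dmxM !dmx_star (dmx_comm b a) !mulmxA !HUd /Qm.
rewrite !mulmxBr !mulmxBl !mulmx1 !mulNmx !mulmxA.
exact: zid2.
Qed.
End MxLemmas.

Section Tens.
Variable (B : algType algC).
Local Notation R := ('M[B]_2).

Definition T m l (c : 'M[algC]_2) (X : 'M[B]_(m, l)) : 'M[R]_(m, l) :=
  \matrix_(i, j) \matrix_(x, y) (c x y *: X i j).

Lemma TM m l p (c c' : 'M[algC]_2) (X : 'M[B]_(m, l)) (Y : 'M[B]_(l, p)) :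
  T c X *m T c' Y = T (c *m c') (X *m Y).
Proof.
apply/matrixP => i j; apply/matrixP => x y.
rewrite !mxE summxE.
under eq_bigr do rewrite -mulmxE mxE.
rewrite exchange_big scaler_suml; apply: eq_bigr => z _.
rewrite scaler_sumr; apply: eq_bigr => r _.
by rewrite !mxE -scalerAl -scalerAr scalerA.
Qed.

Definition msc m l (a : algC) (X : 'M[B]_(m, l)) : 'M[B]_(m, l) :=
  map_mx (fun b => a *: b) X.

Lemma TD1 m l c c' (X : 'M[B]_(m, l)) : T (c + c') X = T c X + T c' X.
Proof. by apply/matrixP => i j; apply/matrixP => x y; rewrite !mxE scalerDl. Qed.
Lemma TD2 m l c (X Y : 'M[B]_(m, l)) : T c (X + Y) = T c X + T c Y.
Proof. by apply/matrixP => i j; apply/matrixP => x y; rewrite !mxE scalerDr. Qed.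
Lemma TN1 m l c (X : 'M[B]_(m, l)) : T (- c) X = - T c X.
Proof. by apply/matrixP => i j; apply/matrixP => x y; rewrite !mxE scaleNr. Qed.
Lemma TN2 m l c (X : 'M[B]_(m, l)) : T c (- X) = - T c X.
Proof. by apply/matrixP => i j; apply/matrixP => x y; rewrite !mxE scalerN. Qed.
Lemma TB2 m l c (X Y : 'M[B]_(m, l)) : T c (X - Y) = T c X - T c Y.
Proof. by rewrite TD2 TN2. Qed.
Lemma T0 m l c : T c (0 : 'M[B]_(m, l)) = 0.
Proof. by apply/matrixP => i j; apply/matrixP => x y; rewrite !mxE scaler0. Qed.
Lemma TMn m l c (X : 'M[B]_(m, l)) p : T c X *+ p = T (c *+ p) X.
Proof.
elim: p => [|p IH]; last by rewrite !mulrS TD1 IH.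
by apply/matrixP => i j; apply/matrixP => x y; rewrite !mxE scale0r.
Qed.
Lemma Tmsc m l c a (X : 'M[B]_(m, l)) : T c (msc a X) = T (a *: c) X.
Proof. by apply/matrixP => i j; apply/matrixP => x y; rewrite !mxE scalerA mulrC. Qed.
Lemma T_tens m l (X : 'M[B]_(m, l)) : tens X = T 1 X.
Proof.
apply/matrixP => i j; apply/matrixP => x y; rewrite !mxE.
by case: (x == y); rewrite ?scale1r ?scale0r.
Qed.
Lemma T_one m : (1%:M : 'M[R]_m) = T 1 1%:M.
Proof.
apply/matrixP => i j; apply/matrixP => x y; rewrite !mxE.
case: (i == j); rewrite ?mulr1n ?mulr0n ?mxE;
  case: (x == y); rewrite /= ?scale1r ?scale0r ?mxE //=.
Qed.
End Tens.

Section RingMx.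
Variable R' : pzRingType.
Lemma mul_mx_scal m l (A : 'M[R']_(m, l)) (a : R') : A *m a%:M = map_mx (fun b => b * a) A.
Proof.
apply/matrixP => i j; rewrite !mxE (bigD1 j) //= mxE eqxx mulr1n big1 ?addr0 //.
by move=> r /negbTE h; rewrite mxE h mulr0n mulr0.
Qed.
Lemma mul_scal_mx m l (A : 'M[R']_(m, l)) (a : R') : a%:M *m A = map_mx (fun b => a * b) A.
Proof.
apply/matrixP => i j; rewrite !mxE (bigD1 i) //= mxE eqxx mulr1n big1 ?addr0 //.
by move=> r /negbTE h; rewrite mxE eq_sym h mulr0n mul0r.
Qed.
Lemma comm_sand n k (W : 'M[R']_(k, n)) (V : 'M[R']_(n, k)) (Q S P : 'M[R']_n)
  (S' P' : 'M[R']_k) :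
  W *m Q = 0 -> Q *m V = 0 ->
  W *m (S *m Q *m P) *m V = (W *m S - S' *m W) *m Q *m (P *m V - V *m P').
Proof.
move=> hWQ hQV.
have h1 : S' *m W *m Q = 0 by rewrite -mulmxA hWQ mulmx0.
have h2 : forall M : 'M[R']_(k, n), M *m Q *m (V *m P') = 0.
  by move=> M; rewrite mulmxA -(mulmxA M) hQV mulmx0 mul0mx.
by rewrite mulmxBl h1 subr0 mulmxBr h2 subr0 !mulmxA.
Qed.
Lemma mulmxMnr m l p (A : 'M[R']_(m, l)) (C : 'M[R']_(l, p)) q :
  A *m (C *+ q) = (A *m C) *+ q.
Proof. by elim: q => [|q IH]; rewrite ?mulr0n ?mulmx0 // !mulrS mulmxDr IH. Qed.
Lemma mulmxMnl m l p (A : 'M[R']_(m, l)) (C : 'M[R']_(l, p)) q :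
  (A *+ q) *m C = (A *m C) *+ q.
Proof. by elim: q => [|q IH]; rewrite ?mulr0n ?mul0mx // !mulrS mulmxDl IH. Qed.
End RingMx.

Definition ct (c : 'M[algC]_2) : 'M[algC]_2 := \matrix_(x, y) (c y x)^*.

Definition sC1 : 'M[algC]_2 := \matrix_(i, j) if i == j then 0 else 1.
Definition sC2 : 'M[algC]_2 :=
  \matrix_(i, j) if i == j then 0 else if val i == 0%N then - 'i else 'i.
Definition sC3 : 'M[algC]_2 :=
  \matrix_(i, j) if i == j then (if val i == 0%N then 1 else -1) else 0.
Definition e0 (j : 'I_4) : 'M[algC]_2 :=
  match val j with 0 => (1/2) *: sC1 | 1 => - ((1/2) *: sC2)
  | 2 => - ((1/2) *: sC3) | _ => ('i / 2) *: 1 end.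
Definition e1 (j : 'I_4) : 'M[algC]_2 :=
  match val j with 0 => (1 / sqrtC 2) *: sC1 | 1 => 0
  | 2 => 0 | _ => - (('i / sqrtC 2) *: 1) end.
Definition e2 (j : 'I_4) : 'M[algC]_2 :=
  match val j with 0 => (1 / sqrtC 6) *: sC1 | 1 => sqrtC (2/3) *: sC2
  | 2 => 0 | _ => ('i / sqrtC 6) *: 1 end.
Definition e3 (j : 'I_4) : 'M[algC]_2 :=
  match val j with 0 => (1 / (2 * sqrtC 3)) *: sC1 | 1 => - ((1 / (2 * sqrtC 3)) *: sC2)
  | 2 => (sqrtC 3 / 2) *: sC3 | _ => ('i / (2 * sqrtC 3)) *: 1 end.

Section Main2.
Variables (B : algType algC) (star : B -> B) (x1 x2 x3 x4 : B).
Hypothesis Hstar : is_star star.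
Hypothesis Hccr : CCR star x1 x2 x3 x4.
Local Notation ms := (mxstar star).
Local Notation dm := (dmx x1 x2 x3 x4).
Local Notation R := ('M[B]_2).

Definition zz (j : 'I_4) : B :=
  match val j with 0 => x1 | 1 => x2 | 2 => x3 | _ => x4 end.
Definition Lx (x : B) (s : 'M[algC]_2) : R := map_mx (fun a => a *: x) s.
Definition Pz (e : 'I_4 -> 'M[algC]_2) : R := \sum_(j < 4) Lx (zz j) (e j).

Lemma szz j : star (zz j) = zz j.
Proof.
rewrite /zz; case: j => [[|[|[|[|j]]]] hj] /=;
  by rewrite ?(sx1 Hccr) ?(sx2 Hccr) ?(sx3 Hccr) ?(sx4 Hccr).
Qed.

Lemma Pz_entry e x y : Pz e x y = \sum_(j < 4) e j x y *: zz j.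
Proof. by rewrite /Pz summxE; apply: eq_bigr => j _; rewrite mxE. Qed.

Lemma entry_mx_scal (p : R) b x y : (p * b%:M) x y = p x y * b.
Proof. by rewrite -mulmxE mul_mx_scal mxE. Qed.
Lemma entry_scal_mx (p : R) b x y : (b%:M * p) x y = b * p x y.
Proof. by rewrite -mulmxE mul_scal_mx mxE. Qed.

Lemma sdr (A : R) b x y : \sum_j A x j * (b%:M : R) j y = A x y * b.
Proof. by have := congr1 (fun M : R => M x y) (mul_mx_scal A b); rewrite !mxE. Qed.
Lemma sdl (A : R) b x y : \sum_j (b%:M : R) x j * A j y = b * A x y.
Proof. by have := congr1 (fun M : R => M x y) (mul_scal_mx A b); rewrite !mxE. Qed.

Lemma Pcomm a b e (X : 'M[B]_(a, b)) :
  (Pz e)%:M *m tens X - tens X *m (Pz e)%:M =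
  \sum_(j < 4) T (e j) (map_mx (comm (zz j)) X).
Proof.
rewrite mul_scal_mx mul_mx_scal; apply/matrixP => i i'.
rewrite !mxE summxE; apply/matrixP => x y.
rewrite !mxE summxE sdr sdl Pz_entry mulr_suml mulr_sumr -sumrB.
apply: eq_bigr => j _; rewrite !mxE.
by rewrite /comm scalerBr scalerAl scalerAr.
Qed.

Lemma star2_Pz e : star2 star (Pz e) = Pz (fun j => ct (e j)).
Proof.
apply/matrixP => x y; rewrite !mxE !Pz_entry (star_sum Hstar).
by apply: eq_bigr => j _; rewrite (starZ Hstar) szz mxE.
Qed.

Lemma map_comm_ms x a b (X : 'M[B]_(a, b)) : star x = x ->
  map_mx (comm x) (ms X) = - ms (map_mx (comm x) X).
Proof. by move=> hx; apply/matrixP => i j; rewrite !mxE (star_comm Hstar _ hx) opprK. Qed.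

Lemma Pcomm2 a b e (X : 'M[B]_(a, b)) :
  tens (ms X) *m (star2 star (Pz e))%:M - (star2 star (Pz e))%:M *m tens (ms X) =
  \sum_(j < 4) T (ct (e j)) (ms (map_mx (comm (zz j)) X)).
Proof.
rewrite star2_Pz -opprB Pcomm -sumrN; apply: eq_bigr => j _.
by rewrite map_comm_ms ?szz // TN2 opprK.
Qed.

Lemma LxD x s s' : Lx x (s + s') = Lx x s + Lx x s'.
Proof. by apply/matrixP => i j; rewrite !mxE scalerDl. Qed.
Lemma LxN x s : Lx x (- s) = - Lx x s.
Proof. by apply/matrixP => i j; rewrite !mxE scaleNr. Qed.
Lemma Lx0 x : Lx x 0 = 0.
Proof. by apply/matrixP => i j; rewrite !mxE scale0r. Qed.
Lemma sx_map s x : sx (map_mx (sc B) s) x = Lx x s.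
Proof. by rewrite /sx mul_mx_scal; apply/matrixP => i j; rewrite !mxE scE. Qed.
Lemma cs_Lx c x s : cs c (Lx x s) = Lx x (c *: s).
Proof. by apply/matrixP => i j; rewrite !mxE scE scalerA. Qed.
Lemma cs_scal c x : cs c (x%:M : R) = Lx x (c *: 1).
Proof.
apply/matrixP => i j; rewrite !mxE scE.
by case: (i == j); rewrite ?mulr1 ?mulr0 ?scale0r ?scaler0 ?mulr1n ?mulr0n.
Qed.

Definition gam (j : 'I_4) : algC :=
  match val j with 0 => 'i | 1 => - 'i | 2 => 'i | _ => - 'i end.
Definition pii (j : 'I_4) : nat :=
  match val j with 0 => 2 | 1 => 1 | 2 => 4 | _ => 3 end.

Lemma Ycomm a b j (X : 'M[B]_(a, b)) :
  map_mx (comm (zz j)) X = msc (gam j) (dm (pii j) X).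
Proof.
apply/matrixP => i i'; rewrite !mxE dvE /zz /gam /pii.
case: j => [[|[|[|[|j]]]] hj] //=;
  by rewrite ?scalerN ?scaleNr ?opprK scalerA mulCii ?scaleN1r ?opprK ?mulrN ?mulNr ?opprK ?mulCii ?scaleN1r ?opprK.
Qed.

Lemma ms_msc a b c (X : 'M[B]_(a, b)) : ms (msc c X) = msc c^* (ms X).
Proof. by apply/matrixP => i j; rewrite !mxE (starZ Hstar). Qed.

Variables (n k : nat) (U : 'M[B]_(n, k)).
Hypothesis HU : ms U *m U = 1%:M.

Lemma UsQ : ms U *m Qm star U = 0.
Proof. by rewrite /Qm mulmxBr mulmx1 mulmxA HU mul1mx subrr. Qed.
Lemma QU : Qm star U *m U = 0.
Proof. by rewrite /Qm mulmxBl mul1mx -mulmxA HU mulmx1 subrr. Qed.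
Lemma Q2_T : Q2 star U = T 1 (Qm star U).
Proof. by rewrite /Q2 /U2 /U2s T_one !T_tens TM mulmx1 /Qm TB2. Qed.
Lemma WQ0 : U2s star U *m Q2 star U = 0.
Proof. by rewrite Q2_T /U2s T_tens TM mul1mx UsQ T0. Qed.
Lemma QV0 : Q2 star U *m U2 U = 0.
Proof. by rewrite Q2_T /U2 T_tens TM mul1mx QU T0. Qed.

Lemma pQp_main e : U2s star U *m pQp star U (Pz e) *m U2 U =
  \sum_(j < 4) \sum_(l < 4)
     T (((gam j)^* *: ct (e j)) *m (gam l *: e l))
       (ms (dm (pii j) U) *m Qm star U *m dm (pii l) U).
Proof.
rewrite /pQp (comm_sand _ _ (star2 star (Pz e))%:M (Pz e)%:M WQ0 QV0).
rewrite /U2s /U2 Pcomm2 Pcomm Q2_T.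
under eq_bigr do rewrite Ycomm ms_msc Tmsc.
under [X in _ *m X]eq_bigr do rewrite Ycomm Tmsc.
rewrite !mulmx_suml; apply: eq_bigr => j _.
rewrite mulmx_sumr; apply: eq_bigr => l _.
by rewrite !TM mulmx1.
Qed.

Lemma sig1E : sig1 B = map_mx (sc B) sC1.
Proof. by apply/matrixP => i j; rewrite !mxE; case: (i == j); rewrite ?sc0 // /sc scale1r. Qed.
Lemma sig2E : sig2 B = map_mx (sc B) sC2.
Proof. by apply/matrixP => i j; rewrite !mxE; case: (i == j); rewrite ?sc0 //; case: (val i == 0%N). Qed.
Lemma sig3E : sig3 B = map_mx (sc B) sC3.
Proof.
apply/matrixP => i j; rewrite !mxE; case: (i == j); rewrite ?sc0 //.
by case: (val i == 0%N); rewrite /sc ?scaleN1r ?scale1r.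
Qed.

Lemma PzE e : Pz e = Lx x1 (e ord0) + Lx x2 (e (lift ord0 ord0))
  + Lx x3 (e (lift ord0 (lift ord0 ord0)))
  + Lx x4 (e (lift ord0 (lift ord0 (lift ord0 ord0)))).
Proof. by rewrite /Pz !big_ord_recl big_ord0 addr0 !addrA. Qed.

Lemma p0E : p0 x1 x2 x3 x4 = Pz e0.
Proof.
by rewrite /p0 PzE sig1E sig2E sig3E !sx_map !cs_Lx !cs_scal /= !LxN.
Qed.
Lemma p1E : p1 x1 x4 = Pz e1.
Proof.
by rewrite /p1 PzE sig1E !sx_map !cs_Lx !cs_scal /= !LxN !Lx0 !addr0.
Qed.
Lemma p2E : p2 x1 x2 x4 = Pz e2.
Proof.
by rewrite /p2 PzE sig1E sig2E !sx_map !cs_Lx !cs_scal /= !Lx0 !addr0.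
Qed.
Lemma p3E : p3 x1 x2 x3 x4 = Pz e3.
Proof.
by rewrite /p3 PzE sig1E sig2E sig3E !sx_map !cs_Lx !cs_scal /= !LxN.
Qed.

Definition cf (e : 'I_4 -> 'M[algC]_2) j l : 'M[algC]_2 :=
  ((gam j)^* *: ct (e j)) *m (gam l *: e l).
Definition Kc j l : 'M[algC]_2 := - (cf e0 j l *+ 3) + cf e1 j l + cf e2 j l + cf e3 j l.
Definition Gm j l : 'M[B]_k := ms (dm (pii j) U) *m Qm star U *m dm (pii l) U.

Lemma bigExpr_E : bigExpr star x1 x2 x3 x4 U =
  \sum_(j < 4) \sum_(l < 4) T (Kc j l) (Gm j l).
Proof.
rewrite /bigExpr !mulmxDr !mulmxDl mulmxN mulNmx mulmxMnr mulmxMnl.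
rewrite p0E p1E p2E p3E !pQp_main.
rewrite -sumrMnl -sumrN -!big_split; apply: eq_bigr => j _.
rewrite -sumrMnl -sumrN -!big_split; apply: eq_bigr => l _.
by rewrite /Kc !TD1 TN1 TMn.
Qed.
End Main2.



Definition kd (a b x y : nat) : algC :=
  match a, b, x, y with
  | 1, 2, 0, 0 => 'i | 1, 2, 1, 1 => - 'i
  | 2, 1, 0, 0 => - 'i | 2, 1, 1, 1 => 'i
  | 3, 4, 0, 0 => 'i | 3, 4, 1, 1 => - 'i
  | 4, 3, 0, 0 => - 'i | 4, 3, 1, 1 => 'i
  | 1, 3, 0, 1 => 1 | 1, 3, 1, 0 => -1
  | 3, 1, 0, 1 => -1 | 3, 1, 1, 0 => 1
  | 2, 4, 0, 1 => -1 | 2, 4, 1, 0 => 1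
  | 4, 2, 0, 1 => 1 | 4, 2, 1, 0 => -1
  | 1, 4, 0, 1 => 'i | 1, 4, 1, 0 => 'i
  | 4, 1, 0, 1 => - 'i | 4, 1, 1, 0 => - 'i
  | 2, 3, 0, 1 => 'i | 2, 3, 1, 0 => 'i
  | 3, 2, 0, 1 => - 'i | 3, 2, 1, 0 => - 'i
  | _, _, _, _ => 0
  end.
Definition KD a b : 'M[algC]_2 := \matrix_(x, y) kd a b x y.

Lemma csq (r : algC) : 0 <= r -> (sqrtC r)^* = sqrtC r.
Proof. by move=> h; apply: conj_Creal; apply: sqrtC_real. Qed.
Lemma cs2 : (sqrtC 2 : algC)^* = sqrtC 2. Proof. by apply: csq; rewrite ler0n. Qed.
Lemma cs3 : (sqrtC 3 : algC)^* = sqrtC 3. Proof. by apply: csq; rewrite ler0n. Qed.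
Lemma sq6 : (sqrtC 6 : algC) = sqrtC 2 * sqrtC 3.
Proof. by rewrite -sqrtCM ?nnegrE ?ler0n // -natrM. Qed.
Lemma h2 : (sqrtC 2 : algC) * sqrtC 2 = 2. Proof. by rewrite -expr2 sqrtCK. Qed.
Lemma h3 : (sqrtC 3 : algC) * sqrtC 3 = 3. Proof. by rewrite -expr2 sqrtCK. Qed.
Lemma s20 : (sqrtC 2 : algC) != 0. Proof. by rewrite sqrtC_eq0 pnatr_eq0. Qed.
Lemma s30 : (sqrtC 3 : algC) != 0. Proof. by rewrite sqrtC_eq0 pnatr_eq0. Qed.
Lemma sq23 : (sqrtC (2/3) : algC) = sqrtC 2 / sqrtC 3.
Proof.
have h : sqrtC (2/3) * sqrtC 3 = sqrtC 2 :> algC.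
  rewrite -sqrtCM ?nnegrE ?divr_ge0 ?ler0n // mulfVK //.
  by rewrite pnatr_eq0.
by rewrite -h mulfK ?s30.
Qed.

Lemma cN (a : algC) : (- a)^* = - a^*. Proof. exact: rmorphN. Qed.
Lemma c0 : (0 : algC)^* = 0. Proof. exact: rmorph0. Qed.
Lemma c1 : (1 : algC)^* = 1. Proof. exact: rmorph1. Qed.
Lemma cM (a b : algC) : (a * b)^* = a^* * b^*. Proof. exact: rmorphM. Qed.
Lemma ctZ c M : ct (c *: M) = c^* *: ct M.
Proof. by apply/matrixP => x y; rewrite !mxE cM. Qed.
Lemma ctN M : ct (- M) = - ct M.
Proof. by apply/matrixP => x y; rewrite !mxE cN. Qed.
Lemma ct0 : ct 0 = 0.
Proof. by apply/matrixP => x y; rewrite !mxE c0. Qed.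
Lemma ct1 : ct 1 = 1.
Proof. by apply/matrixP => x y; rewrite !mxE conjC_nat eq_sym. Qed.
Lemma ctS1 : ct sC1 = sC1.
Proof.
apply/matrixP => x y; rewrite !mxE.
by case: x => [[|[|x]] hx] //; case: y => [[|[|y]] hy] //=; rewrite ?c1 ?c0.
Qed.
Lemma ctS2 : ct sC2 = sC2.
Proof.
apply/matrixP => x y; rewrite !mxE.
by case: x => [[|[|x]] hx] //; case: y => [[|[|y]] hy] //=; rewrite ?c0 ?cN ?conjCi ?opprK.
Qed.
Lemma ctS3 : ct sC3 = sC3.
Proof.
apply/matrixP => x y; rewrite !mxE.
by case: x => [[|[|x]] hx] //; case: y => [[|[|y]] hy] //=; rewrite ?c1 ?c0 ?cN ?c1.
Qed.
Lemma cR (a : algC) : a \is Num.real -> a^* = a.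
Proof. exact: conj_Creal. Qed.
Lemma ciR (a : algC) : a \is Num.real -> ('i * a)^* = - 'i * a.
Proof. by move=> h; rewrite cM conjCi cR. Qed.
Ltac realt := rewrite ?(rpredM, rpredV, rpred1, realn, sqrtC_real, ler0n, divr_ge0, rpredN) //.
Lemma cj1 : ((1 / 2 : algC))^* = 1 / 2. Proof. by apply: cR; realt. Qed.
Lemma cj2 : ((1 / sqrtC 2 : algC))^* = 1 / sqrtC 2. Proof. by apply: cR; realt. Qed.
Lemma cj3 : ((1 / sqrtC 6 : algC))^* = 1 / sqrtC 6. Proof. by apply: cR; realt. Qed.
Lemma cj4 : ((sqrtC (2 / 3) : algC))^* = sqrtC (2 / 3). Proof. by apply: cR; realt. Qed.
Lemma cj5 : ((1 / (2 * sqrtC 3) : algC))^* = 1 / (2 * sqrtC 3). Proof. by apply: cR; realt. Qed.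
Lemma cj6 : ((sqrtC 3 / 2 : algC))^* = sqrtC 3 / 2. Proof. by apply: cR; realt. Qed.
Lemma ci1 : (('i / 2 : algC))^* = - 'i / 2. Proof. by rewrite ciR -?mulNr //; realt. Qed.
Lemma ci2 : (('i / sqrtC 2 : algC))^* = - 'i / sqrtC 2. Proof. by rewrite ciR //; realt. Qed.
Lemma ci3 : (('i / sqrtC 6 : algC))^* = - 'i / sqrtC 6. Proof. by rewrite ciR //; realt. Qed.
Lemma ci4 : (('i / (2 * sqrtC 3) : algC))^* = - 'i / (2 * sqrtC 3). Proof. by rewrite ciR //; realt. Qed.

Lemma Kc_E j l : Kc j l = KD (pii j) (pii l).
Proof.
case: j => [[|[|[|[|j]]]] hj] //; case: l => [[|[|[|[|l]]]] hl] //.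
all: rewrite /Kc /cf /e0 /e1 /e2 /e3 /gam /pii /=.
all: rewrite ?(ctZ, ctN, ct0, ct1, ctS1, ctS2, ctS3, cj1, cj2, cj3, cj4, cj5, cj6, ci1, ci2, ci3, ci4, conjCi, cN, opprK).
all: apply/matrixP => x y; rewrite !mxE !big_ord_recl !big_ord0 !mxE.
all: case: x => [[|[|x]] hx] //; case: y => [[|[|y]] hy] //.
all: rewrite /= ?mxE /= ?sq6 ?sq23.
all: have hi := @mulCii algC.
all: have h2' := h2; have h3' := h3; have s2' := s20; have s3' := s30.
all: field: hi h2' h3'; by rewrite ?s2' ?s3'.
Qed.


Section Fin.
Variables (B : algType algC) (star : B -> B) (x1 x2 x3 x4 : B).
Hypothesis Hstar : is_star star.
Hypothesis Hccr : CCR star x1 x2 x3 x4.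
Local Notation ms := (mxstar star).
Local Notation dm := (dmx x1 x2 x3 x4).
Local Notation R := ('M[B]_2).
Variables (n k : nat) (U : 'M[B]_(n, k)).
Hypothesis HU : ms U *m U = 1%:M.

Definition ext (x y : 'I_2) (M : 'M[R]_k) : 'M[B]_k := \matrix_(i, j) M i j x y.
Lemma ext_inj M : (forall x y, ext x y M = 0) -> M = 0.
Proof.
move=> h; apply/matrixP => i j; apply/matrixP => x y.
by have := congr1 (fun N : 'M[B]_k => N i j) (h x y); rewrite !mxE.
Qed.
Lemma ext_T x y c (X : 'M[B]_k) : ext x y (T c X) = msc (c x y) X.
Proof. by apply/matrixP => i j; rewrite !mxE. Qed.
Lemma ext_sum x y (I : Type) (r : seq I) (P : pred I) (F : I -> 'M[R]_k) :
  ext x y (\sum_(i <- r | P i) F i) = \sum_(i <- r | P i) ext x y (F i).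
Proof. by apply/matrixP => i j; rewrite !mxE !summxE; apply: eq_bigr => t _; rewrite !mxE. Qed.

Lemma msc0 (X : 'M[B]_k) : msc 0 X = 0.
Proof. by apply/matrixP => i j; rewrite !mxE scale0r. Qed.
Lemma mscN1 c (X : 'M[B]_k) : msc (- c) X = - msc c X.
Proof. by apply/matrixP => i j; rewrite !mxE scaleNr. Qed.
Lemma mscD c (X Y : 'M[B]_k) : msc c (X + Y) = msc c X + msc c Y.
Proof. by apply/matrixP => i j; rewrite !mxE scalerDr. Qed.
Lemma mscN c (X : 'M[B]_k) : msc c (- X) = - msc c X.
Proof. by apply/matrixP => i j; rewrite !mxE scalerN. Qed.
Lemma mscB c (X Y : 'M[B]_k) : msc c (X - Y) = msc c X - msc c Y.
Proof. by rewrite mscD mscN. Qed.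
Lemma msc1 (X : 'M[B]_k) : msc 1 X = X.
Proof. by apply/matrixP => i j; rewrite !mxE scale1r. Qed.
Lemma mscA a b (X : 'M[B]_k) : msc a (msc b X) = msc (a * b) X.
Proof. by apply/matrixP => i j; rewrite !mxE scalerA. Qed.

Definition o0 : 'I_2 := @Ordinal 2 0 isT.
Definition o1 : 'I_2 := @Ordinal 2 1 isT.
Definition Gn a b : 'M[B]_k := ms (dm a U) *m Qm star U *m dm b U.

Lemma ext_big x y : ext x y (bigExpr star x1 x2 x3 x4 U) =
  \sum_(j < 4) \sum_(l < 4) msc (kd (pii j) (pii l) x y) (Gn (pii j) (pii l)).
Proof.
rewrite (bigExpr_E Hstar Hccr HU) ext_sum; apply: eq_bigr => j _.
rewrite ext_sum; apply: eq_bigr => l _.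
by rewrite Kc_E ext_T mxE.
Qed.

Lemma e00 : ext o0 o0 (bigExpr star x1 x2 x3 x4 U) =
  msc 'i (Fcurv star x1 x2 x3 x4 U 1 2 + Fcurv star x1 x2 x3 x4 U 3 4).
Proof.
rewrite ext_big !big_ord_recl !big_ord0 /= !msc0 !(Fcurv_E Hstar Hccr HU) -!/(Gn _ _).
rewrite ?(add0r, addr0) ?mscN1 !mscD ?mscB ?mscN /pii /=.
by rewrite addrA (addrC (- _)) (addrC (- _) (msc _ _)).
Qed.

Lemma e01 : ext o0 o1 (bigExpr star x1 x2 x3 x4 U) =
  (Fcurv star x1 x2 x3 x4 U 1 3 - Fcurv star x1 x2 x3 x4 U 2 4)
  + msc 'i (Fcurv star x1 x2 x3 x4 U 1 4 + Fcurv star x1 x2 x3 x4 U 2 3).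
Proof.
rewrite ext_big !big_ord_recl !big_ord0 /= !msc0 !(Fcurv_E Hstar Hccr HU) -!/(Gn _ _).
rewrite ?(add0r, addr0) ?mscN1 !mscD ?mscB ?mscN ?msc1 /pii /= ?opprD ?opprB ?opprK !addrA.
by rewrite [LHS](ACl (4*8*1*5*3*6*2*7)%AC).
Qed.
Lemma e10 : ext o1 o0 (bigExpr star x1 x2 x3 x4 U) =
  - (Fcurv star x1 x2 x3 x4 U 1 3 - Fcurv star x1 x2 x3 x4 U 2 4)
  + msc 'i (Fcurv star x1 x2 x3 x4 U 1 4 + Fcurv star x1 x2 x3 x4 U 2 3).
Proof.
rewrite ext_big !big_ord_recl !big_ord0 /= !msc0 !(Fcurv_E Hstar Hccr HU) -!/(Gn _ _).
rewrite ?(add0r, addr0) ?mscN1 !mscD ?mscB ?mscN ?msc1 /pii /= ?opprD ?opprB ?opprK !addrA.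
by rewrite [LHS](ACl (4*8*1*5*3*6*2*7)%AC).
Qed.
Lemma e11 : ext o1 o1 (bigExpr star x1 x2 x3 x4 U) =
  msc (- 'i) (Fcurv star x1 x2 x3 x4 U 1 2 + Fcurv star x1 x2 x3 x4 U 3 4).
Proof.
rewrite ext_big !big_ord_recl !big_ord0 /= !msc0 !(Fcurv_E Hstar Hccr HU) -!/(Gn _ _).
rewrite ?(add0r, addr0) ?mscN1 !mscD ?mscB ?mscN /pii /= ?opprD ?opprB ?opprK !addrA.
by rewrite [LHS](ACl (2*1*4*3)%AC).
Qed.

Lemma ord2 (x : 'I_2) : x = o0 \/ x = o1.
Proof. by case: x => [[|[|x]] hx] //; [left | right]; apply: val_inj. Qed.
Lemma ext0 x y : ext x y 0 = 0.
Proof. by apply/matrixP => i j; rewrite !mxE. Qed.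
Lemma msc_0 c : msc c (0 : 'M[B]_k) = 0.
Proof. by apply/matrixP => i j; rewrite !mxE scaler0. Qed.
Lemma mscDl a b (X : 'M[B]_k) : msc (a + b) X = msc a X + msc b X.
Proof. by apply/matrixP => i j; rewrite !mxE scalerDl. Qed.
Lemma msc_inj (X : 'M[B]_k) : msc 'i X = 0 -> X = 0.
Proof.
move=> h; have := congr1 (msc (- 'i)) h.
by rewrite mscA mulNr mulCii opprK msc1 msc_0.
Qed.

Local Notation F := (Fcurv star x1 x2 x3 x4 U).

Lemma final : (F 1 2 = - F 3 4 /\ F 1 3 = F 2 4 /\ F 1 4 = - F 2 3) <->
  bigExpr star x1 x2 x3 x4 U = 0.
Proof.
split.
  case=> h1 [h2 h3]; apply: ext_inj => x y.
  have ha : F 1 2 + F 3 4 = 0 by rewrite h1 addNr.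
  have hb : F 1 3 - F 2 4 = 0 by rewrite h2 subrr.
  have hc : F 1 4 + F 2 3 = 0 by rewrite h3 addNr.
  case: (ord2 x) => ->; case: (ord2 y) => ->.
  - by rewrite e00 ha msc_0.
  - by rewrite e01 hb hc msc_0 addr0.
  - by rewrite e10 hb hc msc_0 oppr0 addr0.
  - by rewrite e11 ha msc_0.
move=> h.
have E00 := e00; rewrite h ext0 in E00.
have E01 := e01; rewrite h ext0 in E01.
have E10 := e10; rewrite h ext0 in E10.
have ha : F 1 2 + F 3 4 = 0 by apply: msc_inj; rewrite -E00.
set b := F 1 3 - F 2 4 in E01 E10.
set c := F 1 4 + F 2 3 in E01 E10.
have hbb : b + b = 0.
  have : b + msc 'i c - (- b + msc 'i c) = 0 by rewrite -E01 -E10 subrr.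
  by rewrite opprD opprK addrACA subrr addr0.
have hb : b = 0.
  have -> : b = msc (1/2) b + msc (1/2) b by rewrite -mscDl -mulrDl -(natrD _ 1 1) divff ?msc1 // pnatr_eq0.
  by rewrite -mscD hbb msc_0.
have hc : c = 0 by apply: msc_inj; move: E01; rewrite hb add0r => <-.
split; first by apply/eqP; rewrite -addr_eq0 ha.
split; first by apply/eqP; rewrite -subr_eq0 -/b hb.
by apply/eqP; rewrite -addr_eq0 -/c hc.
Qed.
End Fin.


Theorem mainTheorem4 (B : algType algC) (star : B -> B) (x1 x2 x3 x4 : B)
  (Hstar : is_star star) (Hccr : CCR star x1 x2 x3 x4)
  (n k : nat) (U : 'M[B]_(n, k))
  (HU : mxstar star U *m U = 1%:M) :
  let F := Fcurv star x1 x2 x3 x4 U in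
  (F 1 2 = - F 3 4 /\ F 1 3 = F 2 4 /\ F 1 4 = - F 2 3) <->
  bigExpr star x1 x2 x3 x4 U = 0.
Proof. move=> F; exact: (final Hstar Hccr HU). Qed.
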